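(* Let $\partial$ be an intrinsic dimension function (in the sense defined in the context), and let $(X,d,\mu)$ be a space with metric and measure such that the support of $\mu$ is all of $X$. Then $\partial(X)=+\infty$ if and only if $X$ is a singleton, $X\simeq\{\ast\}$.
   Context: A space with metric and measure is a triple $(X,d,\mu)$ where $(X,d)$ is a metric space and $\mu$ is a (Borel) probability measure on $X$. A feature is a $1$-Lipschitz function $f\colon X\to\mathbb R$, i.e. $|f(x)-f(y)|\le d(x,y)$; $\mathcal{L}ip_1(X)$ denotes the set of all of them. For such $f$, $M_f$ denotes a median: $\mu\{f\ge M_f\}\ge 1/2$ and $\mu\{f\le M_f\}\ge 1/2$. The concentration function of $X$ is $\alpha_X(0)=1/2$ and, for $\varepsilon>0$, $\alpha_X(\varepsilon)=\sup_{f\in\mathcal{L}ip_1(X)}\mu\{x: f(x)\ge M_f+\varepsilon\}$ (equivalently $1-\inf\{\mu(A_\varepsilon):\mu(A)\ge 1/2\}$, where $A_\varepsilon$ is the open $\varepsilon$-neighbourhood of $A$). A sequence $(X_n)$ of spaces with metric and measure is a Lévy family if $\alpha_{X_n}(\varepsilon)\to 0$ for every $\varepsilon>0$. Gromov distance: a parametrization of $(X,\mu)$ is a map $\phi\colon[0,1]\to X$ such that $\mu(A)$ equals the Lebesgue measure of $\phi^{-1}(A)$ for all (measurable) $A\subseteq X$. On measurable functions on $[0,1]$ use the metric of convergence in measure $\mathrm{me}_1(f,g)=\inf\{\varepsilon>0: \lambda\{t:|f(t)-g(t)|>\varepsilon\}<\varepsilon\}$ ($\lambda$ = Lebesgue measure).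 The Gromov distance $d_{conc}(X,Y)$ is the infimum, over all parametrizations $\phi$ of $X$ and $\psi$ of $Y$, of the Hausdorff distance (with respect to $\mathrm{me}_1$) between $\{f\circ\phi: f\in\mathcal{L}ip_1(X)\}$ and $\{g\circ\psi: g\in\mathcal{L}ip_1(Y)\}$. An intrinsic dimension function is a function $\partial$ assigning to every space with metric and measure a value in $[0,\infty)\cup\{+\infty\}$ and satisfying: (Axiom 1, concentration) for every sequence $(X_n)$ of spaces with metric and measure, $\partial(X_n)\uparrow\infty$ if and only if $(X_n)$ is a Lévy family; (Axiom 2, smooth dependence) if $d_{conc}(X_n,X)\to 0$ then $\partial(X_n)\to\partial(X)$; (Axiom 3, normalization) $\partial(\mathbb S^n)=\Theta(n)$, where $\mathbb S^n$ is the unit sphere in $\mathbb R^{n+1}$ with the Euclidean distance and the rotation-invariant probability measure. *)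

(* Defs.v *)
From HB Require Import structures.
From mathcomp Require Import all_boot all_order all_algebra.
From mathcomp Require Import all_classical all_reals all_analysis.

Set Implicit Arguments.
Unset Strict Implicit.
Unset Printing Implicit Defensive.

Import Order.TTheory GRing.Theory Num.Theory.
Import numFieldNormedType.Exports.
Local Open Scope classical_set_scope.
Local Open Scope ring_scope.

Section MMSpaces.
Variable R : realType.

Definition mball {T : Type} (d : T -> T -> R) (x : T) (r : R) : set T :=
  [set y | d x y < r].

Definition metric_open {T : Type} (d : T -> T -> R) : set (set T) :=
  [set A | forall x, A x -> exists2 r : R, 0 < r & mball d x r `<=` A].

Definition is_metric {T : Type} (d : T -> T -> R) : Prop :=
  [/\ (forall x y, 0 <= d x y),
      (forall x y, d x y = 0 <-> x = y),
      (forall x y, d x y = d y x) &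
      (forall x y z, d x z <= d x y + d y z)].

(** A space with metric and measure: a metric space (X,d) together with a
    Borel probability measure (the sigma-algebra is the one generated by the
    open sets of d). *)
Record mmspace := MMSpace {
  mm_carrier : pointedType;
  mm_dist : mm_carrier -> mm_carrier -> R;
  mm_metric : is_metric mm_dist;
  mm_mu : probability (g_sigma_algebraType (metric_open mm_dist)) R }.

Arguments mm_dist : clear implicits.
Arguments mm_mu : clear implicits.
Arguments mm_metric : clear implicits.

Definition mmpt (X : mmspace) := g_sigma_algebraType (metric_open (mm_dist X)).

Definition full_support (X : mmspace) : Prop :=
  forall (x : mmpt X) (r : R), 0 < r -> (0 < mm_mu X (mball (mm_dist X) x r))%E.

Definition Lip1 (X : mmspace) (f : mmpt X -> R) : Prop :=
  forall x y, `|f x - f y| <= mm_dist X x y.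

Definition is_median (X : mmspace) (f : mmpt X -> R) (M : R) : Prop :=
  ((2^-1)%:E <= mm_mu X [set x | (M <= f x)%R])%E /\
  ((2^-1)%:E <= mm_mu X [set x | (f x <= M)%R])%E.

Definition conc_fun (X : mmspace) (eps : R) : \bar R :=
  if eps == 0 then (2^-1)%:E else
  ereal_sup [set mm_mu X [set x | fM.2 + eps <= fM.1 x] |
              fM in [set fM : (mmpt X -> R) * R | Lip1 fM.1 /\ is_median fM.1 fM.2]].

Definition Levy_family (Xn : nat -> mmspace) : Prop :=
  forall eps : R, 0 < eps -> (fun n => conc_fun (Xn n) eps) @ \oo --> 0%E.

Definition I01 : set R := `[0%R, 1%R]%classic.

(** parametrizations: phi : [0,1] -> X (represented as a function on R,
    only its restriction to [0,1] matters), Borel measurable on [0,1], whose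
    push-forward of Lebesgue measure on [0,1] is mu. *)
Definition parametrization (X : mmspace) (phi : R -> mmpt X) : Prop :=
  measurable_fun I01 phi /\
  forall A : set (mmpt X), measurable A ->
    mm_mu X A = lebesgue_measure (I01 `&` phi @^-1` A).

Definition me1 (f g : R -> R) : \bar R :=
  ereal_inf [set e%:E | e in [set e : R | 0 < e /\
     (lebesgue_measure (I01 `&` [set t | (e < `|f t - g t|)%R]) < e%:E)%E]].

Definition hausdorff_me1 (S1 S2 : set (R -> R)) : \bar R :=
  maxe (ereal_sup [set ereal_inf [set me1 a b | b in S2] | a in S1])
       (ereal_sup [set ereal_inf [set me1 a b | a in S1] | b in S2]).

Definition lip_param (X : mmspace) (phi : R -> mmpt X) : set (R -> R) :=
  [set (f \o phi) | f in [set f : mmpt X -> R | Lip1 f]].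

Definition dconc (X Y : mmspace) : \bar R :=
  ereal_inf [set hausdorff_me1 (lip_param pp.1) (lip_param pp.2) |
     pp in [set pp : (R -> mmpt X) * (R -> mmpt Y) |
              parametrization pp.1 /\ parametrization pp.2]].

Definition sqnorm (n : nat) (x : 'rV[R]_n) : R := \sum_(i < n) x ord0 i ^+ 2.

Definition sphere (n : nat) := {x : 'rV[R]_n.+1 | sqnorm x == 1}.

Definition sphere_dist (n : nat) (x y : sphere n) : R :=
  Num.sqrt (sqnorm (val x - val y)).

Definition orthogonal_mx (n : nat) (A : 'M[R]_n) : Prop := A *m A^T = 1%:M.

Definition is_sphere_mm (n : nat) (X : mmspace) : Prop :=
  exists e : sphere n -> mm_carrier X,
    bijective e /\
    (forall x y, mm_dist X (e x) (e y) = sphere_dist x y) /\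
    (forall (A : 'M[R]_n.+1) (B : set (mmpt X)), orthogonal_mx A -> measurable B ->
       mm_mu X [set e s | s in [set s : sphere n |
                  exists2 s', B (e s') & val s' = val s *m A]] = mm_mu X B).

Definition intrinsic_dimension (dim : mmspace -> \bar R) : Prop :=
  [/\ (forall X, (0 <= dim X)%E),
      (* Axiom 1: concentration *)
      (forall Xn : nat -> mmspace,
         ((fun n => dim (Xn n)) @ \oo --> +oo%E) <-> Levy_family Xn),
      (forall (Xn : nat -> mmspace) (X : mmspace),
         (fun n => dconc (Xn n) X) @ \oo --> 0%E ->
         (fun n => dim (Xn n)) @ \oo --> dim X) &
      (exists c1 c2 : R, exists N : nat, 0 < c1 /\ 0 < c2 /\
         forall (n : nat) (S : mmspace), (N <= n)%N -> is_sphere_mm n S ->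
           ((c1 * n%:R)%:E <= dim S)%E /\ (dim S <= (c2 * n%:R)%:E)%E)].

End MMSpaces.

(* Main.v *)
Require Import Defs.
From HB Require Import structures.
From mathcomp Require Import all_boot all_order all_algebra.
From mathcomp Require Import all_classical all_reals all_analysis.
From mathcomp Require Import lra.
Set Implicit Arguments.
Unset Strict Implicit.
Unset Printing Implicit Defensive.
Import Order.TTheory GRing.Theory Num.Theory.
Import numFieldNormedType.Exports.
Local Open Scope classical_set_scope.
Local Open Scope ring_scope.

Section H.
Variable R : realType.
Variable X : mmspace R.

Lemma open_meas (A : set (mmpt X)) : metric_open (@mm_dist R X) A -> measurable A.
Proof. by move=> h; apply: sub_sigma_algebra. Qed.

Lemma dsym x y : @mm_dist R X x y = @mm_dist R X y x.
Proof. by case: (mm_metric X) => _ _ h _; apply: h. Qed.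

Lemma lip_lt_open (f : mmpt X -> R) c : Lip1 f -> metric_open (@mm_dist R X) [set x | f x < c].
Proof.
move=> Lf x /= fx; exists (c - f x); first by rewrite subr_gt0.
move=> y; rewrite /mball /= => dxy; have := Lf y x; rewrite dsym ler_norml => /andP[h1 h2]; lra.
Qed.

Lemma lip_gt_open (f : mmpt X -> R) c : Lip1 f -> metric_open (@mm_dist R X) [set x | c < f x].
Proof.
move=> Lf x /= fx; exists (f x - c); first by rewrite subr_gt0.
move=> y; rewrite /mball /= => dxy; have := Lf y x; rewrite dsym ler_norml => /andP[h1 h2]; lra.
Qed.

Lemma lip_dist x0 : Lip1 (fun x : mmpt X => @mm_dist R X x0 x).
Proof.
move=> x y; case: (mm_metric X) => _ _ hs ht.
have h1 := ht x0 y x; have h2 := ht x0 x y; rewrite (hs y x) in h1.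
rewrite ler_norml; apply/andP; split; lra.
Qed.

Lemma lip_opp (f : mmpt X -> R) : Lip1 f -> Lip1 (fun x => - f x).
Proof. by move=> Lf x y; rewrite -opprD normrN; apply: Lf. Qed.

Lemma lip_max (f : mmpt X -> R) t : Lip1 f -> Lip1 (fun x => Num.max (f x) t).
Proof.
move=> Lf x y; have := Lf x y; rewrite !ler_norml => /andP[h1 h2].
case: (leP (f x) t) => ha; case: (leP (f y) t) => hb;
  rewrite ?(max_r ha) ?(max_l (ltW ha)) ?(max_r hb) ?(max_l (ltW hb)) ?(max_r (ltW ha)) ?(max_r (ltW hb));
  apply/andP; split; lra.
Qed.

Lemma key (f : mmpt X -> R) t eps : 0 < eps -> conc_fun X eps = 0%E -> Lip1 f ->
  ((2^-1)%:E <= mm_mu X [set x | (f x <= t)%R])%E ->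
  mm_mu X [set x | t + eps <= f x] = 0%E.
Proof.
move=> e0 ce Lf hm.
have med : is_median (fun x => Num.max (f x) t) t.
  split.
    have -> : [set x | t <= Num.max (f x) t] = setT.
      by apply/seteqP; split => x //= _; rewrite le_max lexx orbT.
    by rewrite probability_setT lee_fin; lra.
  have -> : [set x | Num.max (f x) t <= t] = [set x | f x <= t].
    by apply/seteqP; split => x /=; rewrite ge_max lexx andbT.
  exact: hm.
have ub : (mm_mu X [set x | (t + eps <= Num.max (f x) t)%R] <= conc_fun X eps)%E.
  rewrite /conc_fun (negbTE (lt0r_neq0 e0)).
  apply: ereal_sup_ubound; exists ((fun x => Num.max (f x) t), t) => //=.
  split => //; exact: lip_max.
have -> : [set x | t + eps <= f x] = [set x | (t + eps <= Num.max (f x) t)%R].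
  apply/seteqP; split => x /=; rewrite le_max => h; first by rewrite h.
  case/orP: h => // h; lra.
apply/eqP; rewrite eq_le measure_ge0 andbT; by rewrite -ce.
Qed.
Lemma meas_ge (f : mmpt X -> R) c : Lip1 f -> measurable [set x | c <= f x].
Proof.
move=> Lf; have -> : [set x | c <= f x] = ~` [set x | f x < c].
  by apply/seteqP; split => x /=; [move=> h; apply/negP; rewrite -leNgt | move/negP; rewrite -leNgt].
by apply: measurableC; apply: open_meas; apply: lip_lt_open.
Qed.

Lemma meas_le (f : mmpt X -> R) c : Lip1 f -> measurable [set x | f x <= c].
Proof.
move=> Lf; have -> : [set x | f x <= c] = ~` [set x | c < f x].
  by apply/seteqP; split => x /=; [move=> h; apply/negP; rewrite -leNgt | move/negP; rewrite -leNgt].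
by apply: measurableC; apply: open_meas; apply: lip_gt_open.
Qed.

End H.

Lemma cst_lim (R : realType) (a l : \bar R) : (fun _ : nat => a) @ \oo --> l -> a = l.
Proof. by move=> h; apply: (cvg_unique _ (cvg_cst a) h). Qed.

Theorem mainTheorem1 (R : realType) (dim : mmspace R -> \bar R)
  (Hdim : intrinsic_dimension dim) (X : mmspace R) (HX : full_support X) :
  dim X = +oo%E <-> (exists x0 : mm_carrier X, forall x : mm_carrier X, x = x0).
Proof.
case: Hdim => _ A1 _ _.
split.
- move=> hd.
  have hc : (fun _ : nat => dim X) @ \oo --> +oo%E by rewrite hd; apply: cvg_cst.
  have ce : forall eps, 0 < eps -> conc_fun X eps = 0%E.
    move=> eps e0.
    have h : (fun _ : nat => conc_fun X eps) @ \oo --> 0%E.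
      exact: ((A1 (fun _ => X)).1 hc eps e0).
    by apply: cst_lim h.
  apply: contrapT => hn.
  have [x1 hx1] : exists x1 : mm_carrier X, x1 <> point.
    by apply/existsNP => h; apply: hn; exists point.
  set x0 : mmpt X := point.
  set del := @mm_dist R X x0 x1.
  have dpos : 0 < del.
    case: (mm_metric X) => h0 h1 _ _; rewrite lt_neqAle h0 andbT.
    by apply/eqP => /esym /h1 e; apply: hx1; rewrite -e.
  set f := fun x : mmpt X => @mm_dist R X x0 x.
  have Lf : Lip1 f by apply: lip_dist.
  have sym := @dsym R X.
  have tri : forall x y z, @mm_dist R X x z <= @mm_dist R X x y + @mm_dist R X y z.
    by case: (mm_metric X).
  have mU := @meas_ge R X f (del / 2) Lf.
  have mC := @meas_le R X f (del / 2) Lf.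
  have finU : mm_mu X [set x | del / 2 <= f x] \is a fin_num by apply: fin_num_measure.
  have finC : mm_mu X [set x | f x <= del / 2] \is a fin_num by apply: fin_num_measure.
  have sum1 : (mm_mu X [set x | (del / 2 <= f x)%R] + mm_mu X [set x | (f x <= del / 2)%R] >= 1)%E.
    rewrite -(probability_setT (mm_mu X)).
    apply: le_trans (measureU2 _ mU mC).
    apply: le_measure; [by rewrite inE; exact: measurableT|by rewrite inE; exact: measurableU|].
    by move=> x _ /=; case: (leP (del/2) (f x)) => h; [left|right; apply: ltW].
  case: (leP (2^-1)%:E (mm_mu X [set x | f x <= del / 2])) => hC.
  + have e6 : 0 < del / 6 by rewrite divr_gt0.
    have k := key e6 (ce _ e6) Lf hC.
    have := HX x1 (del / 3); rewrite divr_gt0 // => /(_ isT).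
    have : (mm_mu X (mball (@mm_dist R X) x1 (del / 3)) <=
             mm_mu X [set x | (del / 2 + del / 6 <= f x)%R])%E.
      apply: le_measure; rewrite ?inE.
      * by apply: open_meas; exact: (@lip_lt_open R X _ (del/3) (lip_dist x1)).
      * by apply: meas_ge.
      move=> y; rewrite /mball /= => hy; rewrite /f.
      have := tri x0 y x1; rewrite (sym y x1) -/del; lra.
    by rewrite k => /le_lt_trans h /h; rewrite ltxx.
  + have hU : ((2^-1)%:E <= mm_mu X [set x | (del / 2 <= f x)%R])%E.
      move: sum1 hC; rewrite -(fineK finU) -(fineK finC) -EFinD !lee_fin lte_fin; lra.
    have Lg : Lip1 (fun x => - f x) by apply: lip_opp.
    have hU' : ((2^-1)%:E <= mm_mu X [set x | (- f x <= - (del / 2))%R])%E.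
      by apply: le_trans hU _; apply: le_measure; rewrite ?inE;
        [apply: meas_ge|apply: meas_le|move=> x /=; rewrite lerN2].
    have e6 : 0 < del / 6 by rewrite divr_gt0.
    have k := key e6 (ce _ e6) Lg hU'.
    have := HX x0 (del / 3); rewrite divr_gt0 // => /(_ isT).
    have : (mm_mu X (mball (@mm_dist R X) x0 (del / 3)) <=
             mm_mu X [set x | (- (del / 2) + del / 6 <= - f x)%R])%E.
      apply: le_measure; rewrite ?inE.
      * by apply: open_meas; exact: (@lip_lt_open R X _ (del/3) (lip_dist x0)).
      * by apply: meas_ge.
      move=> y; rewrite /mball /= => hy; rewrite /f; lra.
    by rewrite k => /le_lt_trans h /h; rewrite ltxx.
- case=> x0 hx.
  have ce : forall eps, 0 < eps -> conc_fun X eps = 0%E.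
    move=> eps e0; rewrite /conc_fun (negbTE (lt0r_neq0 e0)).
    apply/eqP; rewrite eq_le; apply/andP; split.
      apply: ge_ereal_sup => _ [[f M] [Lf [m1 m2]] <-] /=.
      have -> : [set x | M + eps <= f x] = set0.
        apply/seteqP; split => // x /= h; move: m2.
        have -> : [set x | f x <= M] = set0.
          apply/seteqP; split => // y /= hy.
          have : f y = f x by rewrite (hx y) (hx x).
          lra.
        by rewrite measure0 lee_fin; lra.
      by rewrite measure0.
    apply: ereal_sup_ubound; exists ((fun _ => 0), 0) => /=.
      split.
        move=> x y /=; rewrite /= subrr normr0. have [h _ _ _] := mm_metric X; exact: h.
      rewrite /is_median /=; have -> : [set x : mmpt X | (0 <= (0:R))%R] = setT by apply/seteqP; split => x _ //=; rewrite lexx.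
      by split; rewrite probability_setT lee_fin; lra.
    have -> : [set x : mmpt X | (0 + eps <= (0:R))%R] = set0.
      by apply/seteqP; split => // x /=; lra.
    by rewrite measure0.
  have L : Levy_family (fun _ : nat => X).
    move=> eps e0; rewrite (ce _ e0); exact: cvg_cst.
  exact: (cst_lim ((A1 (fun _ => X)).2 L)).
Qed.
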